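(* Let $G$ be a graph that has a set of twins $T=\{u_1,\dots,u_r\}$ with $r\ge 3$, and let $G_i=G-u_i$. If $S_i$ is a zero forcing set of $G_i$, then $S_i\cup\{u_i\}$ is a zero forcing set of $G$. If $S$ is a zero forcing set of $G$ with $u_i\in S$, then $S\setminus\{u_i\}$ is a zero forcing set of $G_i$. Consequently $S_i\mapsto S_i\cup\{u_i\}$ is a bijection between the zero forcing sets of $G_i$ and the zero forcing sets of $G$ containing $u_i$, and a zero forcing set $S_i$ of $G_i$ is minimal if and only if $S_i\cup\{u_i\}$ is a minimal zero forcing set of $G$.
   Context: Vertices $u,w$ of $G$ are twins if $N_G(u)=N_G(w)$ (open neighborhoods); a set of twins is a set of vertices any two of which are twins. $G-u$ is the graph obtained by deleting $u$. Zero forcing: starting with a set $S$ of blue vertices, a blue vertex $v$ may turn blue a white vertex $w$ if $w$ is the only white neighbor of $v$; $S$ is a zero forcing set if repeated application colors all vertices blue. Minimal means minimal under inclusion. *)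

(* Defs.v *)
From mathcomp Require Import all_boot.
Set Implicit Arguments. Unset Strict Implicit. Unset Printing Implicit Defensive.

(* A vertex subset V denotes the
   induced subgraph G[V]; in particular G - u is G[[set: T] :\ u]. *)
Definition simple_graph (T : finType) (e : rel T) : Prop :=
  symmetric e /\ irreflexive e.

Definition nbhd (T : finType) (e : rel T) (x : T) : {set T} := [set y | e x y].

Definition twins (T : finType) (e : rel T) (u w : T) : Prop :=
  nbhd e u = nbhd e w.

Definition twin_set (T : finType) (e : rel T) (A : {set T}) : Prop :=
  forall u w, u \in A -> w \in A -> twins e u w.

Inductive blue (T : finType) (e : rel T) (V S : {set T}) : T -> Prop :=
  | blue_init x : x \in S -> blue e V S x
  | blue_force v w : v \in V -> w \in V -> e v w -> blue e V S v ->
      (forall y, y \in V -> e v y -> y != w -> blue e V S y) ->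
      blue e V S w.

Definition zfs (T : finType) (e : rel T) (V S : {set T}) : Prop :=
  S \subset V /\ forall x, x \in V -> blue e V S x.

Definition min_zfs (T : finType) (e : rel T) (V S : {set T}) : Prop :=
  zfs e V S /\ forall S' : {set T}, S' \proper S -> ~ zfs e V S'.

(* Main.v *)
Require Import Defs.
From mathcomp Require Import all_boot.
Set Implicit Arguments. Unset Strict Implicit. Unset Printing Implicit Defensive.

Section Aux.
Variables (T : finType) (e : rel T).
Hypothesis sg : simple_graph e.

Lemma tw_l a b z : twins e a b -> e a z = e b z.
Proof. by rewrite /twins => H; have := congr1 (fun A : {set T} => z \in A) H; rewrite /nbhd !inE. Qed.

Lemma tw_r a b z : twins e a b -> e z a = e z b.
Proof. case: sg => sy _ H; rewrite (sy z a) (sy z b); exact: tw_l. Qed.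

Lemma tw_nadj a b : twins e a b -> e a b = false.
Proof. case: sg => _ ir H; by rewrite -(tw_r a H) ir. Qed.

Lemma blue_mono (V S S' : {set T}) x : S \subset S' -> blue e V S x -> blue e V S' x.
Proof.
move=> sub; elim=> [y yS|v w vV wV evw _ IHv _ IHy].
  by apply: blue_init; apply: (subsetP sub).
by apply: (blue_force vV wV evw IHv) => y yV evy yw; apply: IHy.
Qed.

Lemma blue_in (V S : {set T}) x : S \subset V -> blue e V S x -> x \in V.
Proof. by move=> sub; case=> [y yS|v w _ wV _ _ _]; [apply: (subsetP sub)|]. Qed.

Definition sw (a b x : T) := if x == a then b else if x == b then a else x.

Lemma sw_inv a b x : a != b -> sw a b (sw a b x) = x.
Proof.
move=> /eqP ab; rewrite /sw.
by repeat (case: eqP => /=; try congruence).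
Qed.

Lemma sw_edge a b x y : a != b -> twins e a b -> e (sw a b x) (sw a b y) = e x y.
Proof.
move=> ab H; have [sy ir] := sg; have nab := tw_nadj H.
have nba : e b a = false by rewrite sy.
rewrite /sw.
move/eqP: ab => ab.
repeat (case: eqP => [?|?]; subst => //=; try congruence);
  by rewrite ?ir ?nab ?nba ?(tw_l _ H) ?(tw_r _ H) ?ir.
Qed.

Lemma blue_swap a b (S X : {set T}) x : a != b -> twins e a b ->
  (forall s, s \in S -> sw a b s \in X) ->
  blue e [set: T] S x -> blue e [set: T] X (sw a b x).
Proof.
move=> ab H hS; elim=> [y yS|v w _ _ evw _ IHv _ IHy].
  by apply: blue_init; apply: hS.
apply: (blue_force (v := sw a b v)) => //; first by rewrite sw_edge.
move=> y _ evy yw; rewrite -(sw_inv y ab); apply: IHy => //.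
  by rewrite -(sw_edge _ _ ab H) sw_inv.
by apply: contra yw => /eqP <-; rewrite sw_inv.
Qed.

Lemma tw_pair a b (S : {set T}) : a != b -> twins e a b -> zfs e [set: T] S ->
  a \in S \/ b \in S.
Proof.
move=> ab H [_ Hz].
case: (boolP (a \in S)) => aS; first by left.
case: (boolP (b \in S)) => bS; first by right.
exfalso.
have key : forall x, blue e [set: T] S x -> x != a /\ x != b.
  move=> x; elim=> [y yS|v w _ _ evw _ _ _ IHy].
    by split; apply: contraTneq yS => ->.
  split; apply/eqP => wE; subst w.
  - have evb : e v b by rewrite -(tw_r _ H).
    by case: (IHy b (in_setT _) evb); rewrite ?eqxx // eq_sym.
  - have eva : e v a by rewrite (tw_r _ H).
    by case: (IHy a (in_setT _) eva ab); rewrite eqxx.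
by case: (key a (Hz a (in_setT _))); rewrite eqxx.
Qed.

End Aux.

Theorem proposition3p6 (T : finType) (e : rel T) (Tw : {set T}) (u : T) :
  simple_graph e -> twin_set e Tw -> 3 <= #|Tw| -> u \in Tw ->
  let Vu := [set: T] :\ u in
  (* S_i zfs of G - u  ==>  S_i + u zfs of G *)
  (forall Si, zfs e Vu Si -> zfs e [set: T] (u |: Si)) /\
  (* S zfs of G containing u  ==>  S - u zfs of G - u *)
  (forall S, zfs e [set: T] S -> u \in S -> zfs e Vu (S :\ u)) /\
  (* Si |-> Si + u is a bijection from zfs of G - u onto zfs of G containing u *)
  ((forall S1 S2, zfs e Vu S1 -> zfs e Vu S2 -> u |: S1 = u |: S2 -> S1 = S2) /\
   (forall S, zfs e [set: T] S -> u \in S ->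
      exists Si, zfs e Vu Si /\ S = u |: Si)) /\
  (* minimality is preserved both ways *)
  (forall Si, zfs e Vu Si -> (min_zfs e Vu Si <-> min_zfs e [set: T] (u |: Si))).
Proof.
move=> sg tws card uT Vu.
have [u1 [u2 [u1T [u2T [u1u [u2u u12]]]]]] : exists u1 u2, u1 \in Tw /\ u2 \in Tw /\
    u1 != u /\ u2 != u /\ u1 != u2.
  have c1 : 1 < #|Tw :\ u| by rewrite (cardsD1 u) uT in card.
  have [u1 u1in] : exists u1, u1 \in Tw :\ u.
    by apply/set0Pn; rewrite -card_gt0; apply: ltnW.
  have c2 : 0 < #|(Tw :\ u) :\ u1| by rewrite (cardsD1 u1) u1in in c1.
  have [u2 u2in] : exists u2, u2 \in (Tw :\ u) :\ u1.
    by apply/set0Pn; rewrite -card_gt0.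
  move: u1in u2in; rewrite !inE => /andP[u1u u1T] /and3P[u21 u2u u2T].
  by exists u1, u2; rewrite eq_sym in u21.
have P1 : forall Si, zfs e Vu Si -> zfs e [set: T] (u |: Si).
  move=> Si [sub Hz]; split; first exact: subsetT.
  move=> x _; case: (eqVneq x u) => [->|xu].
    by apply: blue_init; rewrite setU11.
  have : blue e Vu Si x by apply: Hz; rewrite !inE xu.
  elim=> [y yS|v w _ _ evw _ IHv _ IHy].
    by apply: blue_init; rewrite setU1r.
  apply: (blue_force (v := v)) => // y _ evy yw.
  case: (eqVneq y u) => [->|yu]; first by apply: blue_init; rewrite setU11.
  by apply: IHy => //; rewrite !inE yu.
have P2 : forall S, zfs e [set: T] S -> u \in S -> zfs e Vu (S :\ u).
  move=> S [_ Hz] uS; split; first by apply: setSD; apply: subsetT.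
  have tu1 : twins e u u1 by apply: tws.
  have tu2 : twins e u u2 by apply: tws.
  have [t [tT [tu tS]]] : exists t, t \in Tw /\ t != u /\ t \in S.
    case: (tw_pair sg u12 (tws _ _ u1T u2T) (conj (subsetT S) Hz)) => h.
      by exists u1.
    by exists u2.
  have tut : twins e u t by apply: tws.
  have key : forall x, blue e [set: T] S x -> x = u \/ blue e Vu (S :\ u) x.
    move=> x; elim=> [y yS|v w _ _ evw _ IHv _ IHy].
      case: (eqVneq y u) => [->|yu]; first by left.
      by right; apply: blue_init; rewrite !inE yu.
    case: (eqVneq w u) => [->|wu]; first by left.
    right.
    case: IHv => [vE|bv].
      subst v.
      have twn : w != t by apply: contraTneq evw => ->; rewrite tw_nadj.
      apply: (blue_force (v := t)).
      - by rewrite !inE tu.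
      - by rewrite !inE wu.
      - by rewrite -(tw_l _ tut).
      - by apply: blue_init; rewrite !inE tu.
      move=> y; rewrite !inE => /andP[yu _] ety yw.
      by case: (IHy y (in_setT _) _ yw) => //; [rewrite (tw_l _ tut) | move/eqP; rewrite (negbTE yu)].
    have vV : v \in Vu by apply: blue_in bv; apply: setSD; apply: subsetT.
    apply: (blue_force (v := v)) => //; first by rewrite !inE wu.
    move=> y; rewrite !inE => /andP[yu _] evy yw.
    by case: (IHy y (in_setT _) evy yw) => //; move/eqP; rewrite (negbTE yu).
  move=> x; rewrite !inE => /andP[xu _].
  by case: (key x (Hz x (in_setT _))) => //; move/eqP; rewrite (negbTE xu).
have notu : forall Si, zfs e Vu Si -> u \notin Si.
  by move=> Si [sub _]; apply/negP => /(subsetP sub); rewrite !inE eqxx.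
split; first exact: P1.
split; first exact: P2.
split.
  split.
    move=> S1 S2 h1 h2 E.
    by rewrite -(setU1K (notu _ h1)) -(setU1K (notu _ h2)) E.
  move=> S hS uS; exists (S :\ u); split; first exact: P2.
  by rewrite setD1K.
move=> Si hSi; split.
- case=> _ hmin; split; first exact: P1.
  move=> S' pS' hS'.
  case: (boolP (u \in S')) => uS'.
    apply: (hmin (S' :\ u)); last exact: P2.
    case/properP: pS' => sub [x xU xS'].
    apply/properP; split.
      apply/subsetP => y; rewrite !inE => /andP[yu yS].
      by move: (subsetP sub y yS); rewrite !inE (negbTE yu).
    have xu : x != u by apply: contraNneq xS' => ->.
    exists x; first by move: xU; rewrite !inE (negbTE xu).
    by rewrite !inE negb_and xS' orbT.
  case/properP: pS' => sub _.
  have sub' : S' \subset Si.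
    apply/subsetP => y yS; move: (subsetP sub y yS); rewrite !inE.
    by case/orP => // /eqP yE; subst y; rewrite yS in uS'.
  have [u1S | uS] := tw_pair sg u1u (tws _ _ u1T uT) hS'; last by rewrite uS in uS'.
  set X := u |: (S' :\ u1).
  have hX : zfs e [set: T] X.
    split; first exact: subsetT.
    move=> x _; rewrite -(sw_inv x u1u).
    apply: (blue_swap sg u1u (tws _ _ u1T uT)); last by case: hS' => _; apply.
    move=> s sS; rewrite /sw /X !inE.
    case: (eqVneq s u1) => [_|su1]; first by rewrite eqxx.
    case: (eqVneq s u) => [sE|su]; first by subst s; rewrite sS in uS'.
    by rewrite su1 sS orbT.
  have hX' := P2 X hX (setU11 _ _).
  have E : X :\ u = S' :\ u1.
    by rewrite /X setU1K // !inE negb_and uS' orbT.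
  rewrite E in hX'.
  apply: (hmin (S' :\ u1)) => //.
  apply/properP; split.
    exact: subset_trans (subsetDl _ _) sub'.
  by exists u1; [apply: (subsetP sub') | rewrite !inE eqxx].
- case=> _ hmin; split => // S' pS' hS'.
  apply: (hmin (u |: S')); last exact: P1.
  case/properP: pS' => sub [x xSi xS'].
  apply/properP; split; first exact: setUS.
  have xu : x != u by apply: contraTneq xSi => ->; apply: notu.
  exists x; [by apply: subsetP xSi; apply: subsetUr | rewrite !inE negb_or xu; exact: xS'].
Qed.
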